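(* Let $\mathcal{A}$ be the algebra associated to an $\mathbb{H}_{2n+1}$-structure on $\mathbb{P}V$ such that $T$ fixes every point of the boundary hyperplane $\mathbb{P}V'$. Then $2n+2\leq\dim\mathcal{A}\leq 3n+2$. If moreover the induced $\mathbb{G}_a^{2n}$-structure on $\mathbb{P}\widetilde V$ is tautological, then $\dim\mathcal{A}=2n+2$.
   Context: Work over $\mathbb{C}$, $n\ge1$. The Heisenberg group $\mathbb{H}_{2n+1}$ is $\mathbb{W}\times\mathbb{C}$ ($\mathbb{W}$ a $2n$-dimensional space with non-degenerate skew form $\omega$) with law $(w_1,t_1)(w_2,t_2)=(w_1+w_2,t_1+t_2+\tfrac12\omega(w_1,w_2))$; $T=(0,1)$, $\mathbb{I}=\mathbb{C}T$ its center. $V\cong\mathbb{C}^{2n+2}$. An $\mathbb{H}_{2n+1}$-structure on $\mathbb{P}V$ is an effective algebraic action with a dense open orbit; its boundary is a hyperplane $\mathbb{P}V'$. Regard $\mathbb{H}_{2n+1}$ as a subgroup of $\mathrm{Aut}(\mathbb{P}V)=\mathbb{P}\mathrm{GL}_{2n+2}(\mathbb{C})$, let $\pi:\mathrm{GL}_{2n+2}(\mathbb{C})\to\mathbb{P}\mathrm{GL}_{2n+2}(\mathbb{C})$ be the projection, and let $\mathcal{A}$ (the associated algebra) be the associative unital subalgebra of $\mathrm{Mat}_{2n+2}(\mathbb{C})$ generated by $\pi^{-1}(\mathbb{H}_{2n+1})$. For $o$ in the open orbit, $v$ is the point $\overline{\mathbb{I}\cdot o}\setminus\mathbb{I}\cdot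 o$, $\hat v$ represents it, and $\widetilde V=V/\mathbb{C}\hat v$; when $T$ fixes $\mathbb{P}V'$ pointwise, the action descends to a $\mathbb{G}_a^{2n}$-structure (effective action with dense open orbit) of $\mathbb{H}_{2n+1}/\mathbb{I}\cong\mathbb{G}_a^{2n}$ on $\mathbb{P}\widetilde V$, the induced structure. It is tautological if, in suitable coordinates on the group and homogeneous coordinates, it is $(a_1,\dots,a_{2n})\cdot[z_0,\dots,z_{2n}]=[z_0,z_1+a_1z_0,\dots,z_{2n}+a_{2n}z_0]$. *)

(* Defs.v *)
(* The ground field C is modelled as R[i] = complex R for
   R : realType (a complete archimedean ordered field, i.e. the reals). *)
From HB Require Import structures.
From mathcomp Require Import all_boot all_order all_algebra.
From mathcomp Require Import reals complex.
From mathcomp Require Import mpoly.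
Set Implicit Arguments.
Unset Strict Implicit.
Unset Printing Implicit Defensive.
Import Order.TTheory GRing.Theory Num.Theory.
Local Open Scope ring_scope.

Section Heisenberg.
Variables (R : realType) (n : nat).
Local Notation C := (R[i]).
Local Notation N := (n.*2.+2).

(* skew, non-degenerate form omega(w1,w2) = w1 Om w2^T on W = C^(2n) *)
Definition skew_nondeg (Om : 'M[C]_(n.*2)) : Prop :=
  Om^T = - Om /\ Om \in unitmx.

Definition heis := ('rV[C]_(n.*2) * C)%type.

Definition heis_mul (Om : 'M[C]_(n.*2)) (g h : heis) : heis :=
  (g.1 + h.1, g.2 + h.2 + 2^-1 * (g.1 *m Om *m h.1^T) 0 0).
Definition heis_one : heis := (0, 0).
Definition heisT : heis := (0, 1).

Definition heis_coord (g : heis) : 'I_(n.*2.+1) -> C :=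
  fun i => if (insub (val i) : option 'I_(n.*2)) is Some j
            then g.1 0 j else g.2.

(* --- projective space PV, points represented by nonzero column vectors --- *)
Definition proj_eq (x y : 'cV[C]_N) : Prop := exists c : C, c != 0 /\ y = c *: x.

Definition veval (p : mpoly.mpoly N C) (x : 'cV[C]_N) : C :=
  mpoly.meval (fun i => x i 0) p.

Definition homogeneous (p : mpoly.mpoly N C) : Prop :=
  exists d : nat, p \is mpoly.ishomog1 d mpoly.mdeg.

Definition zcl (S : 'cV[C]_N -> Prop) (x : 'cV[C]_N) : Prop :=
  x != 0 /\ forall p, homogeneous p ->
    (forall y, S y -> y != 0 -> veval p y = 0) -> veval p x = 0.

Definition zclosed (Z : 'cV[C]_N -> Prop) : Prop :=
  exists F : mpoly.mpoly N C -> Prop, (forall p, F p -> homogeneous p) /\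
    forall x, x != 0 -> (Z x <-> forall p, F p -> veval p x = 0).

Variables (Om : 'M[C]_(n.*2)) (rho : heis -> 'M[C]_N).

Definition orbit (o x : 'cV[C]_N) : Prop := exists g, proj_eq (rho g *m o) x.
Definition Iorbit (o x : 'cV[C]_N) : Prop :=
  exists t : C, proj_eq (rho (0, t) *m o) x.

Definition open_dense_orbit (o : 'cV[C]_N) : Prop :=
  o != 0 /\ zclosed (fun x => ~ orbit o x) /\ (forall x, x != 0 -> zcl (orbit o) x).

(* An H_{2n+1}-structure on PV: an effective algebraic action (given by a
   polynomial linear representation lifting it) with a dense open orbit. *)
Definition Hstructure : Prop :=
  [/\ rho heis_one = 1%:M,
      (forall g h, rho (heis_mul Om g h) = rho g *m rho h),
      (exists P : 'I_N -> 'I_N -> mpoly.mpoly n.*2.+1 C,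
          forall g i j, rho g i j = mpoly.meval (heis_coord g) (P i j)),
      (forall g, (exists c : C, rho g = c%:M) -> g = heis_one) &
      (exists o, open_dense_orbit o)].

Definition T_fixes_boundary (o : 'cV[C]_N) : Prop :=
  forall x, x != 0 -> ~ orbit o x -> proj_eq x (rho heisT *m x).

(* A is the associative unital subalgebra of Mat_N(C) generated by
   pi^{-1}(H) = { c rho(g) | c <> 0 } *)
Definition assoc_alg_closed (A : {vspace 'M[C]_N}) : Prop :=
  [/\ (1%:M \in A),
      (forall a b, a \in A -> b \in A -> a *m b \in A) &
      (forall g (c : C), c != 0 -> c *: rho g \in A)].
Definition is_assoc_alg (A : {vspace 'M[C]_N}) : Prop :=
  assoc_alg_closed A /\ forall B, assoc_alg_closed B -> (A <= B)%VS.

(* the tautological G_a^{2n}-action matrix on C^{2n+1} (coordinate 0 = z_0) *)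
Definition taut (a : 'rV[C]_(n.*2)) : 'M[C]_(n.*2.+1) :=
  1%:M + \matrix_(i, j) (if j == ord0 then
                          (if unlift ord0 i is Some k then a 0 k else 0) else 0).

(* The induced G_a^{2n}-structure on P(V / C vh) is tautological, where vh
   represents the point closure(I.o) \ I.o; q : V -> V/C vh is a
   quotient map (any choice of homogeneous coordinates on V/C vh) and
   L : C^{2n} -> W a choice of linear coordinates on H/I = G_a^{2n}. *)
Definition induced_tautological (o : 'cV[C]_N) : Prop :=
  exists vh : 'cV[C]_N,
    [/\ vh != 0, zcl (Iorbit o) vh, ~ Iorbit o vh &
    exists q : 'M[C]_(n.*2.+1, N),
      [/\ q *m vh = 0, \rank q = n.*2.+1 &
      exists L : 'M[C]_(n.*2), L \in unitmx /\
        forall (a : 'rV[C]_(n.*2)) (t : C), exists c : C,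
          c != 0 /\ q *m rho (a *m L, t) = c *: (taut a *m q)]].

End Heisenberg.

(* Main.v *)
Require Import Defs.
From HB Require Import structures.
From mathcomp Require Import all_boot all_order all_algebra.
From mathcomp Require Import reals complex.
From mathcomp Require Import mpoly.
From mathcomp Require Import ring lra zify.
From Stdlib Require Import Classical IndefiniteDescription.
Require Import Defs.
Set Implicit Arguments.
Unset Strict Implicit.
Unset Printing Implicit Defensive.
Import Order.TTheory GRing.Theory Num.Theory.
Local Open Scope ring_scope.

Section Generic.
Variable F : numFieldType.

Lemma poly_inf_roots (p : {poly F}) : (forall s, p.[s] = 0) -> p = 0.
Proof.
move=> H; apply/eqP; apply/negP => /negP nz.
have Ha : all (root p) [seq i%:R | i <- iota 0 (size p)].
  by apply/allP => x /mapP [i _ ->]; rewrite /root H.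
have Hu : uniq [seq i%:R : F | i <- iota 0 (size p)].
  rewrite map_inj_uniq ?iota_uniq // => i j /eqP; rewrite eqr_nat => /eqP //.
by have := max_poly_roots nz Ha Hu; rewrite size_map size_iota ltnn.
Qed.

Lemma poly_ext (p q : {poly F}) : (forall s, p.[s] = q.[s]) -> p = q.
Proof.
move=> H; apply/eqP; rewrite -subr_eq0; apply/eqP; apply: poly_inf_roots => s.
by rewrite hornerD hornerN H subrr.
Qed.

Lemma ip_scalar (D : nat) (c : nat -> F) :
  (forall s : F, \sum_(k < D) s ^+ k * c k = 0) -> forall k, (k < D)%N -> c k = 0.
Proof.
move=> H k kD; set p := \poly_(k < D) c k.
have p0 : p = 0.
  apply: poly_inf_roots => s; rewrite horner_poly -[RHS](H s).
  by apply: eq_bigr => i _; rewrite mulrC.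
by have := congr1 (fun q : {poly F} => q`_k) p0; rewrite coef_poly kD coef0.
Qed.

Lemma ip_mx (a b D : nat) (M : nat -> 'M[F]_(a, b)) :
  (forall s : F, \sum_(k < D) s ^+ k *: M k = 0) -> forall k, (k < D)%N -> M k = 0.
Proof.
move=> H k kD; apply/matrixP => i j; rewrite mxE.
apply: (@ip_scalar D (fun k => M k i j) _ k kD) => s.
have := congr1 (fun A : 'M_(a, b) => A i j) (H s); rewrite summxE [RHS]mxE => E.
by apply: etrans E; apply: eq_bigr => l _; rewrite [RHS]mxE.
Qed.

End Generic.

Section LinePoly.
Variable F : comNzRingType.

Lemma mpoly_line (m : nat) (p : {mpoly F[m]}) (x : 'I_m -> F) :
  exists q : {poly F}, forall s, meval (fun l => s * x l) p = q.[s].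
Proof.
elim/mpolyind: p => [|c mm p _ _ [q Hq]].
  by exists 0 => s; rewrite meval0 horner0.
exists ((c * \prod_l x l ^+ mm l) *: 'X^(mdeg mm) + q) => s.
rewrite mevalD mevalZ mevalX hornerD hornerZ hornerXn Hq; congr (_ + _).
rewrite mdegE -prodrXr -mulrA -big_split /=; congr (_ * _).
by apply: eq_bigr => l _; rewrite exprMn mulrC.
Qed.

End LinePoly.


Section OPS.
Variable F : numFieldType.

Lemma coef1_comp (p : {poly F}) t : (p \Po ('X + t%:P))`_1 = p^`().[t].
Proof.
rewrite -[LHS]mulr1n -coef_deriv -horner_coef0 deriv_comp derivD derivX derivC.
by rewrite addr0 mulr1 horner_comp hornerD hornerX hornerC add0r.
Qed.

Lemma ops (m : nat) (Q : 'I_m.+1 -> 'I_m.+1 -> {poly F}) :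
  (forall s t, \matrix_(i, j) (Q i j).[s + t] =
       (\matrix_(i, j) (Q i j).[s]) *m (\matrix_(i, j) (Q i j).[t])) ->
  \matrix_(i, j) (Q i j).[0] = 1%:M ->
  exists (Y : 'M[F]_m.+1) (D : nat), [/\ (1 < D)%N, Y ^+ D = 0 &
    forall s, \matrix_(i, j) (Q i j).[s] =
       \sum_(k < D) s ^+ k *: ((k`!%:R)^-1 *: Y ^+ k)].
Proof.
move=> Hmul H0.
pose M k := \matrix_(i, j) (Q i j)`_k.
pose D := (\max_(ij : 'I_m.+1 * 'I_m.+1) size (Q ij.1 ij.2)).+2.
have szD : forall i j, (size (Q i j) <= D)%N.
  move=> i j; apply: leq_trans (leqnSn _); apply: leq_trans (leqnSn _).
  exact: (leq_bigmax (i, j)).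
have Mbig : forall k, (D <= k)%N -> M k = 0.
  move=> k Dk; apply/matrixP => i j; rewrite !mxE nth_default //.
  exact: leq_trans (szD i j) Dk.
have Hder : forall k, M k.+1 *+ k.+1 = M 1%N *m M k.
  move=> k; apply/matrixP => i j.
  have Ep : (Q i j)^`() = \sum_l (Q i l)`_1 *: Q l j.
    apply: poly_ext => t.
    have Et : (Q i j \Po ('X + t%:P)) = \sum_l Q i l * ((Q l j).[t])%:P.
      apply: poly_ext => s; rewrite horner_comp hornerD hornerX hornerC.
      have := congr1 (fun A : 'M_m.+1 => A i j) (Hmul s t).
      rewrite !mxE => ->; rewrite horner_sum; apply: eq_bigr => l _.
      by rewrite !mxE hornerM hornerC.
    have := congr1 (fun p : {poly F} => p`_1) Et.
    rewrite coef1_comp => ->; rewrite coef_sum horner_sum; apply: eq_bigr => l _.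
    by rewrite coefMC hornerZ.
  have := congr1 (fun p : {poly F} => p`_k) Ep.
  rewrite coef_deriv coef_sum => E.
  rewrite -scaler_nat !mxE mulr_natl E; apply: eq_bigr => l _.
  by rewrite coefZ !mxE.
have M0 : M 0%N = 1%:M.
  rewrite -H0; apply/matrixP => i j; by rewrite !mxE horner_coef0.
have Mk : forall k, M k = (k`!%:R)^-1 *: M 1%N ^+ k.
  elim=> [|k IH]; first by rewrite M0 fact0 invr1 scale1r expr0.
  have Hk := Hder k.
  have nz : (k.+1%:R : F) != 0 by rewrite pnatr_eq0.
  have -> : M k.+1 = (k.+1%:R)^-1 *: (M k.+1 *+ k.+1).
    by rewrite -scaler_nat scalerA mulVf // scale1r.
  rewrite Hk IH -scalemxAr scalerA factS natrM invfM exprS.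
  by rewrite mulmxE mulrC.
exists (M 1%N), D; split => //.
  have fnz : (D`!%:R : F) != 0 by rewrite pnatr_eq0 -lt0n fact_gt0.
  have := Mk D; rewrite Mbig // => /esym /eqP; rewrite scaler_eq0 invr_eq0.
  by rewrite (negbTE fnz) /= => /eqP.
move=> s; rewrite -(big_mkord xpredT (fun k => s ^+ k *: ((k`!%:R)^-1 *: M 1%N ^+ k))).
apply/matrixP => i j; rewrite mxE (horner_coef_wide s (szD i j)) summxE.
rewrite (big_mkord xpredT (fun k => (s ^+ k *: ((k`!%:R)^-1 *: M 1%N ^+ k)) i j)).
apply: eq_bigr => k _; rewrite -Mk !mxE mulrC //.
Qed.

End OPS.


Section Main.
Variables (R : realType) (n : nat).
Local Notation C := (R[i]).
Local Notation N := (n.*2.+2).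
Variables (Om : 'M[C]_(n.*2)) (rho : heis R n -> 'M[C]_N) (o : 'cV[C]_N).
Hypotheses (hOm : skew_nondeg Om) (hH : Hstructure Om rho).

Definition om (a b : 'rV[C]_(n.*2)) : C := (a *m Om *m b^T) 0 0.
Definition hsc (s : C) (g : heis R n) : heis R n := (s *: g.1, s * g.2).

Lemma om_skew a b : om b a = - om a b.
Proof.
rewrite /om -[b *m Om *m a^T]trmxK mxE !trmx_mul !trmxK hOm.1.
by rewrite mulNmx mulmxN mxE mulmxA.
Qed.

Lemma om_self a : om a a = 0.
Proof.
have h := om_skew a a.
have : om a a *+ 2 == 0 by rewrite mulr2n {1}h addNr.
by rewrite mulrn_eq0 /= => /eqP.
Qed.

Lemma om0l a : om 0 a = 0. Proof. by rewrite /om !mul0mx mxE. Qed.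

Lemma om0r a : om a 0 = 0. Proof. by rewrite /om trmx0 mulmx0 mxE. Qed.

Lemma omZl c a b : om (c *: a) b = c * om a b.
Proof. by rewrite /om -!scalemxAl mxE. Qed.
Lemma omZr c a b : om a (c *: b) = c * om a b.
Proof. by rewrite /om linearZ /= -scalemxAr mxE. Qed.
Lemma omDl a a' b : om (a + a') b = om a b + om a' b.
Proof. by rewrite /om !mulmxDl mxE. Qed.
Lemma omDr a b b' : om a (b + b') = om a b + om a b'.
Proof. by rewrite /om linearD /= mulmxDr mxE. Qed.
Lemma om_suml I (r : seq I) (F : I -> 'rV_(n.*2)) b :
  om (\sum_(i <- r) F i) b = \sum_(i <- r) om (F i) b.
Proof.
elim: r => [|x r IH]; first by rewrite !big_nil om0l.
by rewrite !big_cons omDl IH.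
Qed.
Lemma om_sumr I (r : seq I) (F : I -> 'rV_(n.*2)) a :
  om a (\sum_(i <- r) F i) = \sum_(i <- r) om a (F i).
Proof.
elim: r => [|x r IH]; first by rewrite !big_nil om0r.
by rewrite !big_cons omDr IH.
Qed.

Lemma hsc_mul s t g : heis_mul Om (hsc s g) (hsc t g) = hsc (s + t) g.
Proof.
rewrite /heis_mul /hsc /=; congr pair; first by rewrite scalerDl.
have -> : (s *: g.1 *m Om *m (t *: g.1)^T) 0 0 = s * (t * om g.1 g.1).
  by rewrite -omZr -omZl.
by rewrite om_self !mulr0 addr0 mulrDl.
Qed.

Lemma hsc0 g : hsc 0 g = heis_one R n.
Proof. by rewrite /hsc scale0r mul0r. Qed.

Lemma hsc1 g : hsc 1 g = g.
Proof. by rewrite /hsc scale1r mul1r; case: g. Qed.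

Lemma hscT s : hsc s (heisT R n) = (0, s).
Proof. by rewrite /hsc /heisT /= scaler0 mulr1. Qed.

Lemma heis_comm g h :
  heis_mul Om g h = heis_mul Om (0, om g.1 h.1) (heis_mul Om h g).
Proof.
rewrite /heis_mul /=; congr pair; first by rewrite add0r addrC.
have -> : ((0 : 'rV_(n.*2)) *m Om *m (h.1 + g.1)^T) 0 0 = 0 by rewrite !mul0mx mxE.
rewrite -/(om g.1 h.1) -/(om h.1 g.1) om_skew.
by set x := om g.1 h.1; field.
Qed.

Lemma heis_central g s : heis_mul Om g (0, s) = heis_mul Om (0, s) g.
Proof.
rewrite /heis_mul /=; congr pair; first by rewrite addr0 add0r.
rewrite trmx0 mulmx0 !mul0mx !mxE !mulr0; ring.
Qed.

Lemma heis_coord_hsc s g l : heis_coord (hsc s g) l = s * heis_coord g l.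
Proof. by rewrite /heis_coord; case: insub => [j|] //=; rewrite mxE. Qed.

Lemma rho_ops g : exists (Y : 'M[C]_N) (D : nat), [/\ (1 < D)%N, Y ^+ D = 0 &
    forall s, rho (hsc s g) = \sum_(k < D) s ^+ k *: ((k`!%:R)^-1 *: Y ^+ k)].
Proof.
case: hH => h1 hmul [P hP] _ _.
have : forall ij : 'I_N * 'I_N, exists q : {poly C},
    forall s, meval (fun l => s * heis_coord g l) (P ij.1 ij.2) = q.[s].
  by move=> ij; apply: mpoly_line.
case/fin_all_exists => Q HQ.
have rhoQ : forall s, rho (hsc s g) = \matrix_(i, j) (Q (i, j)).[s].
  move=> s; apply/matrixP => i j; rewrite mxE hP -(HQ (i, j)) /=.
  by apply: meval_eq => l; rewrite heis_coord_hsc.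
have Hm : forall s t, \matrix_(i, j) (Q (i, j)).[s + t] =
   (\matrix_(i, j) (Q (i, j)).[s]) *m (\matrix_(i, j) (Q (i, j)).[t]).
  by move=> s t; rewrite -!rhoQ -hsc_mul hmul.
have H0 : \matrix_(i, j) (Q (i, j)).[0] = 1%:M by rewrite -rhoQ hsc0 h1.
have [Y [D [D1 YD HY]]] := @ops _ _ (fun i j => Q (i, j)) Hm H0.
by exists Y, D; split => // s; rewrite rhoQ HY.
Qed.

End Main.


Lemma mulmx_exprS (F : pzRingType) (m : nat) (Y : 'M[F]_m.+1) k :
  Y ^+ k.+1 = Y *m Y ^+ k.
Proof. by rewrite exprS. Qed.
Lemma mulmx_exprSr (F : pzRingType) (m : nat) (Y : 'M[F]_m.+1) k :
  Y ^+ k.+1 = Y ^+ k *m Y.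
Proof. by rewrite exprSr. Qed.

Lemma nil_kernel (F : fieldType) (m : nat) (Y : 'M[F]_m.+1) D (phi : 'rV[F]_m.+1) :
  phi != 0 -> phi *m Y ^+ D = 0 ->
  exists j, phi *m Y ^+ j != 0 /\ phi *m Y ^+ j *m Y = 0.
Proof.
move=> nz; elim: D => [|D IH]; first by rewrite expr0 mulmx1 => E; rewrite E eqxx in nz.
have [E|NE] := eqVneq (phi *m Y ^+ D) 0; first by move=> _; exact: IH.
by move=> H; exists D; split => //; rewrite -mulmxA -mulmx_exprSr.
Qed.

Lemma vspace_of_pred (K : fieldType) (vT : vectType K) (P : vT -> Prop) :
  P 0 -> (forall x y, P x -> P y -> P (x + y)) -> (forall c x, P x -> P (c *: x)) ->
  exists U : {vspace vT}, forall x, x \in U <-> P x.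
Proof.
move=> P0 PD PZ; apply: NNPP => Hno.
have grow : forall U : {vspace vT}, (forall x, x \in U -> P x) ->
    exists U' : {vspace vT}, (forall x, x \in U' -> P x) /\ (\dim U < \dim U')%N.
  move=> U HU; have : ~ (forall x, P x -> x \in U).
    by move=> H; apply: Hno; exists U => x; split; [exact: HU | exact: H].
  move=> /not_all_ex_not [x Hx]; have [Px xU] : P x /\ x \notin U.
    by split; [apply: NNPP => H; apply: Hx | apply/negP].
  exists (U + <[x]>)%VS; split.
    move=> y /memv_addP [u uU [v /vlineP [c ->] ->]]; apply: PD; first exact: HU.
    exact: PZ.
  rewrite (ltn_leqif (dimv_leqif_sup (addvSl U <[x]>))).
  apply/negP => /subvP H.
  by have := memv_add (mem0v U) (memv_line x); rewrite add0r => /H; apply/negP.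
have big : forall k, exists U : {vspace vT}, (forall x, x \in U -> P x) /\ (k <= \dim U)%N.
  elim=> [|k [U [HU kU]]]; first by exists 0%VS; split => // x; rewrite memv0 => /eqP ->.
  have [U' [HU' lt]] := grow U HU; exists U'; split => //; exact: leq_ltn_trans lt.
have [U [_ HU]] := big (\dim (fullv : {vspace vT})).+1.
by have := dimvS (subvf U); rewrite leqNgt => /negP; apply.
Qed.

Section Main2.
Variables (R : realType) (n : nat).
Local Notation C := (R[i]).
Local Notation N := (n.*2.+2).
Variables (Om : 'M[C]_(n.*2)) (rho : heis R n -> 'M[C]_N).
Hypotheses (hOm : skew_nondeg Om) (hH : Hstructure Om rho).
Variables (Y : heis R n -> 'M[C]_N) (Dg : heis R n -> nat).
Hypothesis hY : forall g, [/\ (1 < Dg g)%N, Y g ^+ Dg g = 0 &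
    forall s, rho (hsc s g) = \sum_(k < Dg g) s ^+ k *: ((k`!%:R)^-1 *: Y g ^+ k)].

Lemma rho_mul g h : rho (heis_mul Om g h) = rho g *m rho h.
Proof. by case: hH. Qed.

Lemma expand_mx (a b : nat) (L : 'M[C]_(a, N)) (Rm : 'M[C]_(N, b)) g s :
  L *m rho (hsc s g) *m Rm =
  \sum_(k < Dg g) s ^+ k *: ((k`!%:R)^-1 *: (L *m Y g ^+ k *m Rm)).
Proof.
have [_ _ ->] := hY g; rewrite mulmx_sumr mulmx_suml; apply: eq_bigr => k _.
by rewrite -!scalemxAr -!scalemxAl.
Qed.

Lemma coef_one g (a b : nat) (L1 L2 : 'M[C]_(a, N)) (R1 R2 : 'M[C]_(N, b)) :
  (forall s, L1 *m rho (hsc s g) *m R1 = L2 *m rho (hsc s g) *m R2) ->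
  L1 *m Y g *m R1 = L2 *m Y g *m R2.
Proof.
move=> H; have [D1 _ _] := hY g.
have Hs : forall s, \sum_(k < Dg g) s ^+ k *:
   ((k`!%:R)^-1 *: (L1 *m Y g ^+ k *m R1 - L2 *m Y g ^+ k *m R2)) = 0.
  move=> s; transitivity (L1 *m rho (hsc s g) *m R1 - L2 *m rho (hsc s g) *m R2).
    by rewrite !expand_mx -sumrB; apply: eq_bigr => k _; rewrite !scalerBr.
  by rewrite H subrr.
have := @ip_mx _ a b (Dg g)
  (fun k => (k`!%:R)^-1 *: (L1 *m Y g ^+ k *m R1 - L2 *m Y g ^+ k *m R2)) Hs 1%N D1.
rewrite /= expr1 factS fact0 muln1 invr1 scale1r => /eqP; rewrite subr_eq0 => /eqP //.
Qed.

Lemma fix_of_ker g (a : nat) (phi : 'M[C]_(a, N)) :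
  phi *m Y g = 0 -> forall s, phi *m rho (hsc s g) = phi.
Proof.
move=> H s; have [D1 _ ->] := hY g; rewrite mulmx_sumr.
case: (Dg g) D1 => // D _; rewrite big_ord_recl /= expr0 scale1r fact0 invr1 scale1r mulmx1.
rewrite big1 ?addr0 // => k _.
by rewrite -!scalemxAr mulmx_exprS mulmxA H mul0mx !scaler0.
Qed.

Definition Zm := Y (heisT R n).
Definition ei (i : 'I_(n.*2)) : heis R n := (delta_mx 0 i, 0).

Lemma rho_central g s : rho g *m rho (0, s) = rho (0, s) *m rho g.
Proof. by rewrite -!rho_mul heis_central. Qed.

Lemma Z_central g : rho g *m Zm = Zm *m rho g.
Proof.
have := @coef_one (heisT R n) N N (rho g) 1%:M 1%:M (rho g).
rewrite mulmx1 mul1mx; apply => s; rewrite mulmx1 mul1mx hscT; exact: rho_central.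
Qed.

Lemma Y_Z g : Y g *m Zm = Zm *m Y g.
Proof.
have := @coef_one g N N 1%:M Zm Zm 1%:M.
rewrite mulmx1 mul1mx; apply => s; rewrite mulmx1 mul1mx; exact: Z_central.
Qed.

Lemma phi_comm (phi : 'rV[C]_N) : phi *m Zm = 0 ->
  forall g h, phi *m rho g *m rho h = phi *m rho h *m rho g.
Proof.
move=> H g h; rewrite -!mulmxA -!rho_mul (heis_comm hOm) rho_mul mulmxA.
by rewrite -(@hscT R n (om Om g.1 h.1)) fix_of_ker.
Qed.

Lemma phi_YY (phi : 'rV[C]_N) : phi *m Zm = 0 ->
  forall g h, phi *m Y g *m Y h = phi *m Y h *m Y g.
Proof.
move=> H g h.
have step1 : forall s, phi *m rho (hsc s g) *m Y h = phi *m Y h *m rho (hsc s g).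
  move=> s; have := @coef_one h 1 N (phi *m rho (hsc s g)) phi 1%:M (rho (hsc s g)).
  rewrite mulmx1 -mulmxA; apply => s'; rewrite mulmx1 -mulmxA.
  by rewrite mulmxA phi_comm.
have := @coef_one g 1 N phi (phi *m Y h) (Y h) 1%:M.
by rewrite mulmx1; apply => s; rewrite mulmx1 step1.
Qed.

Lemma phi_YZ (phi : 'rV[C]_N) g : phi *m Zm = 0 -> phi *m Y g *m Zm = 0.
Proof. by move=> H; rewrite -mulmxA Y_Z mulmxA H mul0mx. Qed.

Lemma phi_YjZ (phi : 'rV[C]_N) g j : phi *m Zm = 0 -> phi *m Y g ^+ j *m Zm = 0.
Proof.
elim: j phi => [|j IH] phi H; first by rewrite expr0 mulmx1.
by rewrite mulmx_exprS mulmxA; apply: IH; exact: phi_YZ.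
Qed.

Lemma phi_YjY (phi : 'rV[C]_N) a b j : phi *m Zm = 0 ->
  phi *m Y a ^+ j *m Y b = phi *m Y b *m Y a ^+ j.
Proof.
elim: j phi => [|j IH] phi H; first by rewrite expr0 mulmx1 mulmx1.
rewrite !mulmx_exprS !mulmxA IH; last exact: phi_YZ.
by rewrite phi_YY.
Qed.

Lemma psi_claim k : (k <= n.*2)%N -> exists phi : 'rV[C]_N,
  [/\ phi != 0, phi *m Zm = 0 & forall i : 'I_(n.*2), (i < k)%N -> phi *m Y (ei i) = 0].
Proof.
elim: k => [_|k IH kle].
  have [_ ZD _] := hY (heisT R n).
  have nz : (delta_mx 0 0 : 'rV[C]_N) != 0.
    by apply/eqP => /matrixP /(_ 0 0); rewrite !mxE eqxx /= => /eqP; rewrite oner_eq0.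
  have H0 : (delta_mx 0 0 : 'rV[C]_N) *m Zm ^+ Dg (heisT R n) = 0.
    by rewrite /Zm ZD mulmx0.
  have [j [H1 H2]] := nil_kernel nz H0.
  by exists (delta_mx 0 0 *m Zm ^+ j); split.
have [phi [nz pZ pY]] := IH (ltnW kle).
pose i0 : 'I_(n.*2) := Ordinal kle.
have [_ YD _] := hY (ei i0).
have H0 : phi *m Y (ei i0) ^+ Dg (ei i0) = 0 by rewrite YD mulmx0.
have [j [H1 H2]] := nil_kernel nz H0.
exists (phi *m Y (ei i0) ^+ j); split => //; first exact: phi_YjZ.
move=> i; rewrite ltnS leq_eqVlt => /orP [/eqP Ei | lt].
  by have -> : i = i0 by apply: val_inj.
by rewrite phi_YjY // pY // mul0mx.
Qed.

Lemma psi_inv (psi : 'rV[C]_N) : psi *m Zm = 0 ->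
  (forall i, psi *m Y (ei i) = 0) -> forall g, psi *m rho g = psi.
Proof.
move=> pZ pY [w t].
pose vk k := \row_j (if (j < k)%N then w 0 j else 0) : 'rV[C]_(n.*2).
suff H : forall k, (k <= n.*2)%N -> forall t, psi *m rho (vk k, t) = psi.
  have := H _ (leqnn _) t.
  have -> // : vk n.*2 = w by apply/rowP => j; rewrite mxE ltn_ord.
elim=> [_ t'|k IH kle t'].
  have -> : vk 0%N = 0 by apply/rowP => j; rewrite !mxE.
  by rewrite -(@hscT R n t') fix_of_ker.
pose i0 : 'I_(n.*2) := Ordinal kle.
have E : (vk k.+1, t') = heis_mul Om
   (vk k, t' - 2^-1 * om Om (vk k) (w 0 i0 *: delta_mx 0 i0)) (hsc (w 0 i0) (ei i0)).
  rewrite /heis_mul /hsc /ei /=; congr pair.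
    apply/rowP => j; rewrite !mxE eqxx /= -val_eqE /= ltnS leq_eqVlt.
    case: ltngtP => h /=; rewrite ?mulr0 ?addr0 ?mulr1 ?add0r //.
    by congr (w 0 _); apply: val_inj.
  by rewrite -/(om Om _ _) mulr0 addr0 subrK.
rewrite E rho_mul mulmxA IH ?(ltnW kle) //; apply: fix_of_ker; exact: pY.
Qed.

Lemma psi_exists : exists psi : 'rV[C]_N,
  [/\ psi != 0, psi *m Zm = 0 & forall g, psi *m rho g = psi].
Proof.
have [psi [nz pZ pY]] := psi_claim (leqnn _).
exists psi; split => //; apply: psi_inv => // i; exact: pY.
Qed.

Lemma mx_ext_col (a : nat) (A B : 'M[C]_(a, N)) :
  (forall x : 'cV[C]_N, A *m x = B *m x) -> A = B.
Proof.
move=> H; apply/matrixP => i j.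
by have := congr1 (fun M : 'cV_a => M i 0) (H (delta_mx j 0)); rewrite -!colE !mxE.
Qed.

Lemma bump0 k : bump 0 k = k.+1. Proof. by []. Qed.

Lemma expand2 g s (a : nat) (V : 'M[C]_(N, a)) : Y g ^+ 2 *m V = 0 ->
  rho (hsc s g) *m V = V + s *: (Y g *m V).
Proof.
move=> H; have [D1 _ ->] := hY g; rewrite mulmx_suml.
case: (Dg g) D1 => // [] [] // D _.
rewrite !big_ord_recl /= expr0 scale1r fact0 invr1 scale1r mul1mx.
rewrite !bump0 expr1 scale1r expr1 -scalemxAl.
rewrite big1 ?addr0 // => k _; rewrite !bump0 -!scalemxAl.
have -> : Y g ^+ k.+2 = Y g ^+ k *m Y g ^+ 2 by rewrite -[k.+2]addn2 exprD.
by rewrite -mulmxA H mulmx0 !scaler0.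
Qed.

Variable o : 'cV[C]_N.
Hypotheses (ho : open_dense_orbit rho o) (hT : T_fixes_boundary rho o).

Definition linp (c : 'I_N -> C) : {mpoly C[N]} := \sum_j c j *: 'X_j.

Lemma linp_homog c : homogeneous (linp c).
Proof.
exists 1%N; apply: rpred_sum => j _; apply: rpredZ.
rewrite dhomogX; apply/eqP; exact: mdeg1.
Qed.

Lemma linp_eval c x : veval (linp c) x = \sum_j c j * x j 0.
Proof.
rewrite /veval /linp; elim/big_rec2: _ => [|j y p _ IH]; first by rewrite meval0.
by rewrite mevalD mevalZ mevalXU IH.
Qed.

Lemma linp_mx (a : nat) (M : 'M[C]_(a, N)) i x :
  veval (linp (fun l => M i l)) x = (M *m x) i 0.
Proof. by rewrite linp_eval mxE. Qed.

Lemma density (a : nat) (M : 'M[C]_(a, N)) :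
  (forall g, M *m (rho g *m o) = 0) -> M = 0.
Proof.
move=> H; apply/matrixP => i j; rewrite mxE.
have xnz : (delta_mx j 0 : 'cV[C]_N) != 0.
  by apply/eqP => /matrixP /(_ j 0); rewrite !mxE !eqxx /= => /eqP; rewrite oner_eq0.
have := (ho.2.2 _ xnz).2 _ (linp_homog (fun l => M i l)).
rewrite linp_mx -colE mxE; apply => y [g [c [_ ->]]] _.
by rewrite linp_mx -scalemxAr H scaler0 mxE.
Qed.

Variable psi : 'rV[C]_N.
Hypotheses (psi_nz : psi != 0) (psiZ : psi *m Zm = 0) (psi_rho : forall g, psi *m rho g = psi).

Lemma psi_o : (psi *m o) 0 0 != 0.
Proof.
apply/eqP => E; move/eqP: psi_nz; apply; apply: density => g.
have Po : psi *m o = 0 by apply/matrixP => i j; rewrite !ord1 E mxE.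
by rewrite mulmxA psi_rho Po.
Qed.

Lemma orbit_psi x : orbit rho o x -> psi *m x != 0.
Proof.
case=> g [c [cnz ->]]; rewrite -scalemxAr mulmxA psi_rho.
apply/eqP => /matrixP /(_ 0 0); rewrite !mxE => /eqP; rewrite mulf_eq0 (negbTE cnz) /=.
by have := psi_o; rewrite mxE => /negbTE ->.
Qed.

Lemma colnil (m : nat) (M : 'M[C]_m.+1) D (x : 'cV[C]_m.+1) :
  x != 0 -> M ^+ D *m x = 0 ->
  exists j, M ^+ j *m x != 0 /\ M *m (M ^+ j *m x) = 0.
Proof.
move=> nz; elim: D => [|D IH]; first by rewrite expr0 mul1mx => E; rewrite E eqxx in nz.
have [E|NE] := eqVneq (M ^+ D *m x) 0; first by move=> _; exact: IH.
by move=> H; exists D; split => //; rewrite mulmxA -mulmx_exprS.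
Qed.

Lemma ker_psi_Z (x : 'cV[C]_N) : psi *m x = 0 -> Zm *m x = 0.
Proof.
move=> px; have [->|xnz] := eqVneq x 0; first by rewrite mulmx0.
have nob : ~ orbit rho o x by move=> /orbit_psi; rewrite px eqxx.
have [c [cnz Hc]] := hT xnz nob.
have [_ ZD _] := hY (heisT R n).
have H0 : Zm ^+ Dg (heisT R n) *m x = 0 by rewrite /Zm ZD mul0mx.
have [[|j] [H1 H2]] := colnil xnz H0.
  by move: H2; rewrite expr0 mul1mx.
pose y := Zm ^+ j *m x.
have Zy : Zm *m y = Zm ^+ j.+1 *m x by rewrite mulmxA -mulmx_exprS.
have Z2y : Y (heisT R n) ^+ 2 *m y = 0.
  by rewrite -/Zm mulmx_exprS expr1 -mulmxA Zy.
have E1 := expand2 1 Z2y; rewrite hsc1 scale1r -/Zm in E1.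
have rT : rho (heisT R n) *m y = c *: y.
  rewrite /y mulmxA.
  have -> : rho (heisT R n) *m Zm ^+ j = Zm ^+ j *m rho (heisT R n).
    by apply: commrX; apply: Z_central.
  by rewrite -mulmxA Hc scalemxAr.
have : Zm *m y = (c - 1) *: y by rewrite scalerBl scale1r -rT E1 addrC addKr.
move=> Zy2.
have : (c - 1) *: (Zm *m y) = 0 by rewrite scalemxAr -Zy2 Zy.
move=> /eqP; rewrite scaler_eq0 => /orP [|]; last by rewrite Zy (negbTE H1).
rewrite subr_eq0 => /eqP c1; move: Zy2; rewrite c1 subrr scale0r Zy => E.
by rewrite E eqxx in H1.
Qed.

Definition pso := (psi *m o) 0 0.
Definition um := pso^-1 *: (Zm *m o).

Lemma e11 (A B : 'M[C]_1) (k : C) : (A - k *: B) 0 0 = A 0 0 - k * B 0 0.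
Proof. by rewrite !mxE. Qed.

Lemma Z_decomp : Zm = um *m psi.
Proof.
apply: mx_ext_col => x.
pose a := (psi *m x) 0 0.
have Hy : psi *m (x - (a / pso) *: o) = 0.
  apply/matrixP => i j; rewrite !ord1 mulmxBr -scalemxAr e11 -/a -/pso.
  by rewrite mulfVK ?psi_o // subrr [RHS]mxE.
have := ker_psi_Z Hy; rewrite mulmxBr -scalemxAr => /eqP; rewrite subr_eq0 => /eqP ->.
rewrite -mulmxA [psi *m x]mx11_scalar -/a mul_mx_scalar /um scalerA mulrC.
by [].
Qed.

Lemma Z_rho g : Zm *m rho g = Zm.
Proof. by rewrite Z_decomp -mulmxA psi_rho. Qed.

Lemma psi_um : psi *m um = 0.
Proof. by rewrite /um -scalemxAr mulmxA psiZ mul0mx scaler0. Qed.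

Lemma Z2 : Zm *m Zm = 0.
Proof. by rewrite {1}Z_decomp -mulmxA psiZ mulmx0. Qed.

Lemma rho0s s : rho (0, s) = 1%:M + s *: Zm.
Proof.
have H : Y (heisT R n) ^+ 2 *m 1%:M = 0 by rewrite mulmx1 expr2; exact: Z2.
by have := expand2 s H; rewrite hscT !mulmx1.
Qed.

Lemma Z_nz : Zm != 0.
Proof.
apply/eqP => Z0; case: hH => _ _ _ heff _.
have : heisT R n = heis_one R n.
  by apply: heff; exists 1; rewrite /heisT rho0s Z0 scaler0 addr0.
by move/(congr1 snd) => /= /eqP; rewrite oner_eq0.
Qed.

Lemma Zo_nz : Zm *m o != 0.
Proof.
apply/eqP => E; move/eqP: Z_nz; apply.
by rewrite Z_decomp /um E scaler0 mul0mx.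
Qed.

Lemma rho_comm g h : rho g *m rho h = rho h *m rho g + om Om g.1 h.1 *: Zm.
Proof.
rewrite -rho_mul (heis_comm hOm) !rho_mul rho0s mulmxDl mul1mx -scalemxAl.
by rewrite !mulmxA !Z_rho.
Qed.

Lemma sep_functional (W : {vspace 'cV[C]_N}) (x : 'cV[C]_N) : x \notin W ->
  exists phi : 'rV[C]_N, phi *m x != 0 /\ forall y, y \in W -> phi *m y = 0.
Proof.
move=> xW; pose k := \dim W; pose b := vbasis W.
pose Bm : 'M[C]_(k, N) := \matrix_(i, j) (b`_i) j 0.
have nsub : ~~ (x^T <= Bm)%MS.
  apply/negP => /submxP [D HD]; move/negP: xW; apply.
  have -> : x = \sum_(i < k) D 0 i *: b`_i.
    apply/matrixP => j l; rewrite ord1.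
    have := congr1 (fun M : 'rV_N => M 0 j) HD; rewrite !mxE => ->.
    by rewrite summxE; apply: eq_bigr => i _; rewrite !mxE.
  apply: memv_suml => i _; apply: memvZ; apply: vbasis_mem; apply: mem_nth.
  by rewrite size_tuple ltn_ord.
rewrite submxE in nsub.
have [j Hj] : exists j, (x^T *m cokermx Bm) 0 j != 0.
  apply/existsP; move: nsub; apply: contraR => /existsPn H.
  by apply/eqP/matrixP => i l; rewrite ord1 [RHS]mxE; apply/eqP/negPn/H.
exists (col j (cokermx Bm))^T; split.
  apply/eqP => /matrixP /(_ 0 0); rewrite [RHS]mxE => E; move/eqP: Hj; apply.
  rewrite -[RHS]E !mxE; apply: eq_bigr => l _; rewrite !mxE mulrC.
  by [].
have Hb : forall i : 'I_k, (col j (cokermx Bm))^T *m b`_i = 0.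
  move=> i; apply/matrixP => a c; rewrite !ord1.
  have E := congr1 (fun M : 'M_(k, N) => M i j) (mulmx_coker Bm).
  rewrite [RHS]mxE in E; rewrite [RHS]mxE -[RHS]E !mxE.
  by apply: eq_bigr => l _; rewrite !mxE mulrC.
move=> y yW; rewrite (coord_vbasis yW) mulmx_sumr big1 // => i _.
by rewrite -scalemxAr Hb scaler0.
Qed.

Definition fo : 'Hom('M[C]_N, 'cV[C]_N) := linfun (mulmxr o).
Lemma foE a : fo a = a *m o. Proof. by rewrite lfunE. Qed.

Variable A : {vspace 'M[C]_N}.
Hypothesis hA : is_assoc_alg rho A.

Lemma rho_in_A g : rho g \in A.
Proof. by case: hA => [[_ _ H] _]; have := H g 1 (oner_neq0 _); rewrite scale1r. Qed.

Lemma fA_full : (fo @: A)%VS = fullv.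
Proof.
apply/eqP; rewrite eqEsubv subvf /=; apply/subvP => x _.
apply/negPn/negP => xW; have [phi [phix Hphi]] := sep_functional xW.
have phi0 : phi = 0.
  apply: density => g; apply: Hphi; rewrite -foE; apply: memv_img; exact: rho_in_A.
by move: phix; rewrite phi0 mul0mx eqxx.
Qed.

Lemma dimA_eq : \dim A = (\dim (A :&: lker fo) + N)%N.
Proof.
rewrite -(limg_ker_dim fo A) fA_full dimvf /=; congr (_ + _)%N.
first [ by rewrite dim_matrix muln1 | by rewrite (@dim_matrix C N 1) muln1 | by [] | by rewrite /dim /= muln1 ].
Qed.

Definition comb (s : seq (C * heis R n)) : 'M[C]_N := \sum_(p <- s) p.1 *: rho p.2.
Definition vcomb (s : seq (C * heis R n)) : 'rV[C]_(n.*2) := \sum_(p <- s) p.1 *: p.2.1.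

Lemma A_comb a : a \in A -> exists s, a = comb s.
Proof.
have P0 : exists s, (0 : 'M[C]_N) = comb s by exists [::]; rewrite /comb big_nil.
have PD : forall x y, (exists s, x = comb s) -> (exists s, y = comb s) ->
    exists s, x + y = comb s.
  by move=> x y [s ->] [t ->]; exists (s ++ t); rewrite /comb big_cat.
have PZ : forall c x, (exists s, x = comb s) -> exists s, c *: x = comb s.
  move=> c x [s ->]; exists [seq (c * p.1, p.2) | p <- s].
  by rewrite /comb big_map scaler_sumr; apply: eq_bigr => p _; rewrite scalerA.
have [U HU] := vspace_of_pred P0 PD PZ.
have cU : assoc_alg_closed rho U.
  case: hH => h1 _ _ _ _; split.
  - apply/HU; exists [:: (1, heis_one R n)].
    by rewrite /comb big_cons big_nil addr0 /= scale1r h1.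
  - move=> a1 b1 /HU [s ->] /HU [t ->]; apply/HU.
    exists [seq (p.1 * q.1, heis_mul Om p.2 q.2) | p <- s, q <- t].
    rewrite /comb big_allpairs_dep /= mulmx_suml; apply: eq_bigr => p _.
    rewrite mulmx_sumr; apply: eq_bigr => q _.
    by rewrite -scalemxAl -scalemxAr scalerA rho_mul.
  - move=> g c _; apply/HU; exists [:: (c, g)].
    by rewrite /comb big_cons big_nil addr0.
move=> aA; apply/HU; have := hA.2 U cU => /subvP; exact.
Qed.

Lemma comb_comm s h : comb s *m rho h = rho h *m comb s + om Om (vcomb s) h.1 *: Zm.
Proof.
elim: s => [|[c g] s IH].
  by rewrite /comb /vcomb !big_nil mul0mx mulmx0 om0l scale0r addr0.
rewrite /comb /vcomb !big_cons /= -/(comb s) -/(vcomb s).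
rewrite mulmxDl mulmxDr -scalemxAl rho_comm IH omDl omZl -scalemxAr.
rewrite scalerDr scalerDl scalerA; rewrite !addrA; congr (_ + _).
by rewrite addrAC.
Qed.

Lemma comb_comm2 s t :
  comb s *m comb t = comb t *m comb s + om Om (vcomb s) (vcomb t) *: Zm.
Proof.
elim: t => [|[c g] t IH].
  by rewrite /comb /vcomb !big_nil mul0mx mulmx0 om0r scale0r addr0.
rewrite [comb (_ :: _)]/comb [vcomb (_ :: _)]/vcomb !big_cons /= -/(comb t) -/(vcomb t).
rewrite mulmxDl mulmxDr -scalemxAr comb_comm IH omDr omZr -scalemxAl.
rewrite scalerDr scalerDl scalerA; rewrite !addrA; congr (_ + _).
by rewrite addrAC.
Qed.

Lemma ann_bound : (\dim (A :&: lker fo) <= n)%N.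
Proof.
set U := (A :&: lker fo)%VS; set k := \dim U; set bs := vbasis U.
have bsU : forall i : 'I_k, bs`_i \in U.
  by move=> i; apply: vbasis_mem; apply: mem_nth; rewrite size_tuple ltn_ord.
have bsA : forall i : 'I_k, bs`_i \in A.
  by move=> i; have := bsU i; rewrite memv_cap => /andP [].
have bso : forall i : 'I_k, bs`_i *m o = 0.
  by move=> i; have := bsU i; rewrite memv_cap => /andP [_]; rewrite memv_ker foE => /eqP.
have [S HS] : exists S : 'I_k -> seq (C * heis R n), forall i : 'I_k, bs`_i = comb (S i).
  exact: (@fin_all_exists 'I_k (fun _ => seq (C * heis R n))
            (fun i s => bs`_i = comb s) (fun i => A_comb (bsA i))).
pose v (i : 'I_k) := vcomb (S i).
pose Bm : 'M[C]_(k, n.*2) := \matrix_(i, j) v i 0 j.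
have iso : forall i j, om Om (v i) (v j) = 0.
  move=> i j; have := comb_comm2 (S i) (S j); rewrite -!HS => E.
  have := congr1 (fun M => M *m o) E.
  rewrite mulmxDl -!mulmxA !bso !mulmx0 add0r -scalemxAl => /esym/eqP.
  by rewrite scaler_eq0 (negbTE Zo_nz) orbF => /eqP.
have BOB : Bm *m Om *m Bm^T = 0.
  apply/matrixP => i j; rewrite [RHS]mxE -(iso i j) /om !mxE.
  apply: eq_bigr => l _; rewrite !mxE; congr (_ * _).
  by apply: eq_bigr => m _; rewrite !mxE.
have indep : forall lam : 'rV[C]_k, lam *m Bm = 0 -> lam = 0.
  move=> lam HL.
  have sv : \sum_i lam 0 i *: v i = 0.
    apply/rowP => j; transitivity ((lam *m Bm) 0 j); last by rewrite HL !mxE.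
    by rewrite summxE !mxE; apply: eq_bigr => i _; rewrite !mxE.
  pose a := \sum_i lam 0 i *: bs`_i.
  have ao : a *m o = 0.
    by rewrite /a mulmx_suml big1 // => i _; rewrite -scalemxAl bso scaler0.
  have acomm : forall h, a *m rho h = rho h *m a.
    move=> h; rewrite /a mulmx_suml mulmx_sumr.
    transitivity (\sum_i lam 0 i *: (rho h *m bs`_i) +
                  om Om (\sum_i lam 0 i *: v i) h.1 *: Zm).
      rewrite om_suml scaler_suml -big_split /=; apply: eq_bigr => i _.
      by rewrite -scalemxAl HS comb_comm scalerDr omZl scalerA.
    by rewrite sv om0l scale0r addr0; apply: eq_bigr => i _; rewrite scalemxAr.
  have a0 : a = 0.
    by apply: density => h; rewrite mulmxA acomm -mulmxA ao mulmx0.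
  have /freeP fr := basis_free (vbasisP U).
  by apply/rowP => i; rewrite [RHS]mxE; exact: (fr (fun j => lam 0 j) a0 i).
have rfB : row_free Bm.
  rewrite -kermx_eq0; apply/eqP/row_matrixP => r; rewrite row0; apply: indep.
  by rewrite -row_mul mulmx_ker row0.
have rOm : row_free Om by rewrite row_free_unit; case: hOm.
have rk : \rank Bm = k by apply/eqP.
have := mulmx0_rank_max BOB; rewrite mxrankMfree // mxrank_tr rk.
by rewrite addnn leq_double.
Qed.

Lemma bounds : (N <= \dim A <= 3 * n + 2)%N.
Proof. rewrite dimA_eq; have := ann_bound; lia. Qed.

Definition Em (a : 'rV[C]_(n.*2)) : 'M[C]_(n.*2.+1) :=
  \matrix_(i, j) (if j == ord0 then
                   (if unlift ord0 i is Some k then a 0 k else 0) else 0).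

Lemma tautE a : taut a = 1%:M + Em a. Proof. by []. Qed.

Lemma Em2 a : Em a *m Em a = 0.
Proof.
apply/matrixP => i j; rewrite mxE (bigD1 ord0) //= big1 ?addr0.
  by rewrite [Em a ord0 j]mxE unlift_none if_same mulr0 [RHS]mxE.
by move=> l ln0; rewrite [Em a i l]mxE (negbTE ln0) mul0r.
Qed.

Lemma taut_part : induced_tautological rho o -> \dim A = N.
Proof.
case=> vh [vhnz vhcl vhnI [q [qvh rq [L [Lu HL]]]]].
have vhW : vh \in (<[o]> + <[Zm *m o]>)%VS.
  apply/negPn/negP => nW; have [phi [phvh Hphi]] := sep_functional nW.
  have pho : phi *m o = 0.
    apply: Hphi; have := memv_add (memv_line o) (mem0v <[Zm *m o]>%VS).
    by rewrite addr0.
  have phZ : phi *m (Zm *m o) = 0.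
    apply: Hphi; have := memv_add (mem0v <[o]>%VS) (memv_line (Zm *m o)).
    by rewrite add0r.
  move/eqP: phvh; apply; apply/matrixP => i j; rewrite !ord1 [RHS]mxE -linp_mx.
  apply: (vhcl.2 _ (linp_homog _)) => y [t [c [cnz ->]]] _.
  rewrite linp_mx -scalemxAr rho0s mulmxDl mul1mx -scalemxAl mulmxDr pho.
  by rewrite -scalemxAr phZ scaler0 addr0 scaler0 mxE.
move/memv_addP: vhW => [u /vlineP [al ->] [w /vlineP [be ->] Evh]].
have al0 : al = 0.
  apply/eqP/negPn/negP => aln; apply: vhnI; exists (be / al); exists al; split => //.
  by rewrite Evh rho0s mulmxDl mul1mx -scalemxAl scalerDr scalerA mulrC mulfVK.
have qZo : q *m (Zm *m o) = 0.
  have ben : be != 0.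
    by apply: contraNneq vhnz => b0; rewrite Evh al0 b0 !scale0r addr0.
  move: qvh; rewrite Evh al0 scale0r add0r -scalemxAr => /eqP.
  by rewrite scaler_eq0 (negbTE ben) => /eqP.
have [pt Hpt] : exists pt : 'rV_(n.*2.+1), psi = pt *m q.
  apply/submxP.
  have H0 : col_mx q psi *m (Zm *m o) = 0.
    by rewrite mul_col_mx qZo mulmxA psiZ mul0mx col_mx0.
  have := mulmx0_rank_max H0.
  have rZo : (0 < \rank (Zm *m o))%N by rewrite lt0n mxrank_eq0 Zo_nz.
  move=> Hr.
  have sq : (q <= col_mx q psi)%MS.
    by have := submx_refl (col_mx q psi); rewrite col_mx_sub => /andP [].
  have E := geq_leqif (mxrank_leqif_sup sq).
  have : (col_mx q psi <= q)%MS.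
    by rewrite -E rq; move: Hr rZo; clear; lia.
  by rewrite col_mx_sub => /andP [].
have rfq : row_free q by rewrite /row_free rq.
have qrho : forall g, q *m rho g = taut (g.1 *m invmx L) *m q.
  move=> [w0 t]; have [c [cnz Hc]] := HL (w0 *m invmx L) t.
  rewrite mulmxKV // in Hc; rewrite Hc /=.
  suff -> : c = 1 by rewrite scale1r.
  set a := w0 *m invmx L in Hc *.
  have E1 : pt *m (c *: (taut a *m q)) = pt *m q.
    by rewrite -Hc mulmxA -Hpt psi_rho.
  have E2 : (c *: (pt *m taut a) - pt) *m q = 0.
    by rewrite mulmxBl -scalemxAl -mulmxA scalemxAr E1 subrr.
  move/eqP: E2; rewrite mulmx_free_eq0 // subr_eq0 => /eqP E3.
  rewrite tautE mulmxDr mulmx1 scalerDr in E3.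
  have E4 : (c - 1) *: (pt *m Em a) = 0.
    have := congr1 (fun M => M *m Em a) E3.
    rewrite mulmxDl -!scalemxAl -mulmxA Em2 mulmx0 scaler0 addr0 => E5.
    by rewrite scalerBl E5 scale1r subrr.
  apply/eqP/negPn/negP => c1.
  have ptE : pt *m Em a = 0.
    by move/eqP: E4; rewrite scaler_eq0 subr_eq0 (negbTE c1) => /eqP.
  rewrite ptE scaler0 addr0 in E3.
  have : (c - 1) *: pt = 0 by rewrite scalerBl E3 scale1r subrr.
  move/eqP; rewrite scaler_eq0 subr_eq0 (negbTE c1) /= => /eqP pt0.
  by move/eqP: psi_nz; apply; rewrite Hpt pt0 mul0mx.
have U0 : forall a, a \in (A :&: lker fo)%VS -> a = 0.
  move=> a; rewrite memv_cap => /andP [aA]; rewrite memv_ker foE => /eqP ao.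
  have [s Hs] := A_comb aA.
  have qa : q *m a = 0.
    apply: density => h.
    have E : a *m rho h = rho h *m a + om Om (vcomb s) h.1 *: Zm by rewrite Hs comb_comm.
    rewrite mulmxA -(mulmxA q a) E mulmxDr mulmxDl -!mulmxA ao !mulmx0 add0r.
    by rewrite -scalemxAl -scalemxAr qZo scaler0.
  have vs0 : vcomb s = 0.
    have Ht : (\sum_(p <- s) p.1 *: taut (p.2.1 *m invmx L)) *m q = 0.
      rewrite -qa Hs /comb mulmx_suml mulmx_sumr; apply: eq_bigr => p _.
      by rewrite -scalemxAl -scalemxAr qrho.
    move/eqP: Ht; rewrite mulmx_free_eq0 // => /eqP Ht.
    have : vcomb s *m invmx L = 0.
      apply/rowP => k; have := congr1 (fun M : 'M_(n.*2.+1) => M (lift ord0 k) ord0) Ht.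
      rewrite summxE [RHS]mxE => E; rewrite [RHS]mxE -[RHS]E /vcomb mulmx_suml summxE.
      apply: eq_bigr => p _; rewrite -scalemxAl [LHS]mxE [RHS]mxE; congr (_ * _).
      have nl : (lift ord0 k == ord0) = false by rewrite eq_sym (negbTE (neq_lift _ _)).
      by rewrite tautE [RHS]mxE [X in X + _]mxE nl mulr0n add0r /Em [RHS]mxE eqxx liftK.
    by move=> vL; have := congr1 (mulmxr L) vL; rewrite /= mulmxKV // mul0mx.
  apply: density => h.
  by rewrite mulmxA Hs comb_comm vs0 om0l scale0r addr0 -Hs -mulmxA ao mulmx0.
have Ud : \dim (A :&: lker fo) = 0%N.
  apply/eqP; rewrite dimv_eq0 -subv0; apply/subvP => x /U0 ->; exact: mem0v.
by rewrite dimA_eq Ud.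
Qed.

End Main2.


Theorem proposition3p4 (R : realType) (n : nat) (hn : (0 < n)%N)
  (Om : 'M[R[i]]_(n.*2)) (rho : heis R n -> 'M[R[i]]_(n.*2.+2))
  (o : 'cV[R[i]]_(n.*2.+2))
  (hOm : skew_nondeg Om)
  (hH : Hstructure Om rho)
  (ho : open_dense_orbit rho o)
  (hT : T_fixes_boundary rho o)
  (A : {vspace 'M[R[i]]_(n.*2.+2)})
  (hA : is_assoc_alg rho A) :
  (n.*2.+2 <= \dim A <= 3 * n + 2)%N /\
  (induced_tautological rho o -> \dim A = n.*2.+2).
Proof.
have ex : forall g, exists YD : 'M[R[i]]_(n.*2.+2) * nat,
    [/\ (1 < YD.2)%N, YD.1 ^+ YD.2 = 0 &
     forall s, rho (hsc s g) = \sum_(k < YD.2) s ^+ k *: ((k`!%:R)^-1 *: YD.1 ^+ k)].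
  by move=> g; have [Y [D H]] := rho_ops hOm hH g; exists (Y, D).
pose YD g := proj1_sig (constructive_indefinite_description _ (ex g)).
have hY : forall g, [/\ (1 < (YD g).2)%N, (YD g).1 ^+ (YD g).2 = 0 &
     forall s, rho (hsc s g) =
       \sum_(k < (YD g).2) s ^+ k *: ((k`!%:R)^-1 *: (YD g).1 ^+ k)].
  by move=> g; exact: (proj2_sig (constructive_indefinite_description _ (ex g))).
have [psi [pnz pZ prho]] :=
  @psi_exists _ _ _ _ hOm hH (fun g => (YD g).1) (fun g => (YD g).2) hY.
split; first exact: (bounds hOm hH hY ho hT pnz pZ prho hA).
by move=> ht; exact: (taut_part hOm hH hY ho hT pnz pZ prho hA ht).
Qed.
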